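(* Let $k\ge3$, and let $\mathcal P=\{p_1,\dots,p_{k^2}\}$ be a family of real polynomials in the commuting variables $x_1,\dots,x_{2k^2}$ admitting an nc representation $p(X,Y)$ of degree $d>1$. Let $t\ge2$ and $s\in\{t,t+1\}$, and let $e\ne0$. Suppose that, counting over all polynomials of the family, there are exactly $k$ terms $e\,x_{i_1}^sx_{j_1}^t,\dots,e\,x_{i_k}^sx_{j_k}^t$ with $x_{i_n}\ne x_{j_n}$ (i.e. exactly $k$ two letter terms with coefficient $e$ whose exponents are $s$ and $t$). Then for each $n$, one of $x_{i_n},x_{j_n}$ is a diagonal entry of $X$ and the other is the diagonal entry of $Y$ in the same position; and if $p_{\ell_n}$ is the polynomial containing $e\,x_{i_n}^sx_{j_n}^t$, then $p_{\ell_n}$ occupies that same diagonal position in the array $p(X,Y)$.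
   Context: The family $\mathcal P$ admits an nc representation $p(X,Y)$ if there are $k\times k$ matrices $X,Y$ whose $2k^2$ entries are the variables $x_1,\dots,x_{2k^2}$, each used exactly once, and a noncommutative polynomial $p$ in two letters with real coefficients such that the matrix $p(X,Y)$ is a $k\times k$ array whose entries are $p_1,\dots,p_{k^2}$, each exactly once. A ''term'' means a monomial with its nonzero coefficient after collecting like terms. *)

(* Defs.v *)
From HB Require Import structures.
From mathcomp Require Import all_boot all_order all_algebra.
From mathcomp Require Import finmap.
From mathcomp Require Import mpoly.
From mathcomp Require Import Rstruct.
From Stdlib Require Rdefinitions.

Set Implicit Arguments.
Unset Strict Implicit.
Unset Printing Implicit Defensive.

Import Order.TTheory GRing.Theory Num.Theory.
Local Open Scope ring_scope.
Local Open Scope fset_scope.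

Notation real := Rdefinitions.R.

(* A noncommutative polynomial in two letters X (= false) and Y (= true)
   with real coefficients: a finitely supported map from words to reals. *)
Definition ncpoly := {fsfun seq bool -> real with 0%R}.

Definition ncdeg (p : ncpoly) : nat := (\max_(w <- finsupp p) size w)%N.

Notation cpoly N := {mpoly real[N]}.

Definition word_eval N k (X Y : 'M[cpoly N]_k) (w : seq bool) : 'M[cpoly N]_k :=
  foldr (fun (b : bool) M => (if b then Y else X) *m M) 1%:M w.

Definition nc_eval N k (p : ncpoly) (X Y : 'M[cpoly N]_k) : 'M[cpoly N]_k :=
  \sum_(w <- finsupp p) (p w)%:MP *: word_eval X Y w.

(* The matrix of variables: position (b, i, j) is entry (i, j) of X if b = false,
   of Y if b = true; pos gives the index of the variable placed there. *)
Definition var_mx N k (pos : bool * 'I_k * 'I_k -> 'I_N) (b : bool) : 'M[cpoly N]_k :=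
  \matrix_(i, j) 'X_(pos (b, i, j)).

Definition mon2 N (i j : 'I_N) (s t : nat) : 'X_{1..N} :=
  (U_(i) *+ s + U_(j) *+ t)%MM.

Definition two_letter N (s t : nat) (m : 'X_{1..N}) : Prop :=
  exists i j : 'I_N, i != j /\ m = mon2 i j s t.

(* Main.v *)
Require Import Defs.
From HB Require Import structures.
From mathcomp Require Import all_boot all_order all_algebra all_fingroup.
From mathcomp Require Import finmap mpoly Rstruct.
From Stdlib Require Import Classical.
From mathcomp Require Import zify.
Set Implicit Arguments.
Unset Strict Implicit.
Import GRing.Theory.
Local Open Scope ring_scope.



Lemma sum_eq_pred (T : finType) (P : pred T) (x : T) :
  (\sum_(y | P y) (x == y : nat))%N = P x.
Proof.
case Px: (P x).
  rewrite (bigD1 x) //= eqxx big1 // => y /andP [_ ny]; by rewrite eq_sym (negbTE ny).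
rewrite big1 // => y Py; case: eqP => // exy; by rewrite exy Py in Px.
Qed.

Section Inv.
Variables (k N : nat) (pos : bool * 'I_k * 'I_k -> 'I_N) (qpos : 'I_N -> bool * 'I_k * 'I_k).
Hypothesis posK : cancel pos qpos.
Hypothesis qposK : cancel qpos pos.

Definition vrow (x : 'I_N) := (qpos x).1.2.
Definition vcol (x : 'I_N) := (qpos x).2.
Definition outd (m : 'X_{1..N}) v := (\sum_(x | vrow x == v) m x)%N.
Definition ind (m : 'X_{1..N}) v := (\sum_(x | vcol x == v) m x)%N.

Definition Inv (a b : 'I_k) (m : 'X_{1..N}) : Prop :=
  [/\ (forall v, outd m v + (b == v) = ind m v + (a == v))%N,
      (m = 0%MM \/ exists x, (0 < m x)%N /\ vrow x = a) &
      ((forall x, (0 < m x)%N -> vrow x = vcol x) ->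
         (forall x, (0 < m x)%N -> vrow x = a) /\ a = b)].

Lemma outdD m1 m2 v : outd (m1 + m2)%MM v = (outd m1 v + outd m2 v)%N.
Proof. rewrite /outd -big_split /=; apply: eq_bigr => x _; by rewrite mnmDE. Qed.
Lemma indD m1 m2 v : ind (m1 + m2)%MM v = (ind m1 v + ind m2 v)%N.
Proof. rewrite /ind -big_split /=; apply: eq_bigr => x _; by rewrite mnmDE. Qed.
Lemma outd0 v : outd 0%MM v = 0%N.
Proof. rewrite /outd big1 // => x _; by rewrite mnm0E. Qed.
Lemma ind0 v : ind 0%MM v = 0%N.
Proof. rewrite /ind big1 // => x _; by rewrite mnm0E. Qed.

Lemma Inv_add a c b m1 m2 : Inv a c m1 -> Inv c b m2 -> Inv a b (m1 + m2)%MM.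
Proof.
move=> [F1 N1 L1] [F2 N2 L2]; split.
- move=> v; rewrite outdD indD; move: (F1 v) (F2 v); lia.
- case: N1 => [m10|[x [hx rx]]]; last first.
    right; exists x; split=> //; rewrite mnmDE; lia.
  have ca : c = a.
    move: (F1 a); rewrite m10 outd0 ind0 eqxx /=; case: eqP => //; lia.
  case: N2 => [m20|[x [hx rx]]].
    by left; rewrite m10 m20 addm0.
  right; exists x; split; first (rewrite mnmDE; lia). by rewrite rx.
- move=> H.
  have [r1 e1] : (forall x, (0 < m1 x)%N -> vrow x = a) /\ a = c.
    apply: L1 => x hx; apply: H; rewrite mnmDE; lia.
  have [r2 e2] : (forall x, (0 < m2 x)%N -> vrow x = c) /\ c = b.
    apply: L2 => x hx; apply: H; rewrite mnmDE; lia.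
  split; last by rewrite e1 e2.
  move=> x; rewrite mnmDE => hx.
  case h1: (0 < m1 x)%N; first exact: r1.
  rewrite e1; apply: r2; lia.
Qed.

Lemma Inv_U b a c : Inv a c U_(pos (b, a, c))%MM.
Proof.
have hr : vrow (pos (b,a,c)) = a by rewrite /vrow posK.
have hc : vcol (pos (b,a,c)) = c by rewrite /vcol posK.
split.
- move=> v; rewrite /outd /ind.
  under eq_bigr do rewrite mnm1E.
  under [X in (_ = X + _)%N]eq_bigr do rewrite mnm1E.
  rewrite !(@sum_eq_pred _ (fun x => vrow x == v)) !(@sum_eq_pred _ (fun x => vcol x == v)).
  rewrite /= hr hc; lia.
- right; exists (pos (b,a,c)); by rewrite mnm1E eqxx.
- move=> H; have h := H (pos (b,a,c)); rewrite mnm1E eqxx hr hc in h.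
  have ac := h isT; split => // x; rewrite mnm1E; case: eqP => // <- _; done.
Qed.

Lemma Inv_0 a : Inv a a 0%MM.
Proof.
split; [by move=> v; rewrite outd0 ind0 | by left | move=> _; split=> // x; by rewrite mnm0E].
Qed.

End Inv.



Section Good.
Variables (k N : nat) (pos : bool * 'I_k * 'I_k -> 'I_N) (qpos : 'I_N -> bool * 'I_k * 'I_k).
Hypothesis posK : cancel pos qpos.
Hypothesis qposK : cancel qpos pos.

Definition good a b (q : cpoly N) := forall m, ~ Inv qpos a b m -> q@_m = 0.

Lemma good_mul a c b p q : good a c p -> good c b q -> good a b (p * q).
Proof.
move=> gp gq m nI; rewrite mcoeffM big1 // => [[m1 m2]] /= /eqP em.
case: (classic (Inv qpos a c m1)) => h1; last by rewrite gp // mul0r.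
case: (classic (Inv qpos c b m2)) => h2; last by rewrite gq // mulr0.
by exfalso; apply: nI; rewrite em; apply: Inv_add h1 h2.
Qed.

Lemma good_sum a b (I : Type) (r : seq I) (P : pred I) (F : I -> cpoly N) :
  (forall i, P i -> good a b (F i)) -> good a b (\sum_(i <- r | P i) F i).
Proof.
move=> h m nI; rewrite (raddf_sum (mcoeff m)); apply: big1 => i Pi; exact: h.
Qed.

Lemma good_X b a c : good a c 'X_(pos (b, a, c)).
Proof.
move=> m nI; rewrite mcoeffX; case: eqP => // em; exfalso; apply: nI.
rewrite -em; exact: Inv_U.
Qed.

Lemma good_word w a b :
  good a b (word_eval (var_mx pos false) (var_mx pos true) w a b).
Proof.
elim: w a b => [|c w IH] a b /=.
  rewrite mxE; case: eqP => [->|_] m nI; last by rewrite mulr0n mcoeff0.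
  rewrite mulr1n mcoeff1; case: eqP => // em; exfalso; apply: nI; rewrite em; exact: Inv_0.
rewrite mxE; apply: good_sum => j _; apply: good_mul (IH j b).
by case: c; rewrite mxE; apply: good_X.
Qed.

Lemma good_nc p a b :
  good a b (nc_eval p (var_mx pos false) (var_mx pos true) a b).
Proof.
rewrite /nc_eval summxE; apply: good_sum => w _ m nI.
rewrite mxE mcoeffCM good_word // mulr0 //.
Qed.
End Good.



Section Sym.
Variables (k N : nat) (pos : bool * 'I_k * 'I_k -> 'I_N) (qpos : 'I_N -> bool * 'I_k * 'I_k).
Hypothesis posK : cancel pos qpos.
Hypothesis qposK : cancel qpos pos.
Variable pi : {perm 'I_k}.

Definition rhof (x : 'I_N) : 'I_N := pos ((qpos x).1.1, pi (qpos x).1.2, pi (qpos x).2).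
Lemma rhof_inj : injective rhof.
Proof.
move=> x y /(can_inj posK) [e1 e2 e3].
rewrite -(qposK x) -(qposK y); congr pos.
move: (perm_inj e2) (perm_inj e3) e1.
by case: (qpos x) => [[??]?]; case: (qpos y) => [[??]?] /= -> -> ->.
Qed.
Definition rho : 'S_N := perm rhof_inj.

Lemma rho_pos b r c : rho (pos (b, r, c)) = pos (b, pi r, pi c).
Proof. by rewrite permE /rhof posK. Qed.

Lemma msym_X x : msym rho ('X_x : cpoly N) = 'X_(rho x).
Proof.
rewrite msymX; congr mpolyX; apply/mnmP => y; rewrite !mnmE.
by rewrite -(inj_eq (@perm_inj _ rho)) permKV.
Qed.

Let X := var_mx pos false.
Let Y := var_mx pos true.

Lemma sym_word w a b :
  msym rho (word_eval X Y w a b) = word_eval X Y w (pi a) (pi b).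
Proof.
elim: w a b => [|c w IH] a b /=.
  by rewrite !mxE rmorphMn rmorph1 (inj_eq perm_inj).
rewrite !mxE (big_morph (msym rho) (@msymD _ _ rho) (msym0 _ rho)).
under eq_bigr do rewrite msymM IH.
symmetry; rewrite (reindex_inj (@perm_inj _ pi)) /=; apply: eq_bigr => j _.
congr (_ * _); case: c; by rewrite !mxE msym_X rho_pos.
Qed.

Lemma sym_nc p a b :
  msym rho (nc_eval p X Y a b) = nc_eval p X Y (pi a) (pi b).
Proof.
rewrite /nc_eval !summxE (big_morph (msym rho) (@msymD _ _ rho) (msym0 _ rho)); apply: eq_bigr => w _.
by rewrite !mxE !mul_mpolyC msymZ sym_word.
Qed.

Lemma sym_coef p a b (i j : 'I_N) s t :
  (nc_eval p X Y (pi a) (pi b))@_(mon2 (rho i) (rho j) s t)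
  = (nc_eval p X Y a b)@_(mon2 i j s t).
Proof.
rewrite -sym_nc mcoeff_sym; congr mcoeff; apply/mnmP => y.
by rewrite mnmE /mon2 !mnmDE !mulmnE !mnm1E !(inj_eq perm_inj).
Qed.
End Sym.



Section Struct.
Variables (k N : nat) (qpos : 'I_N -> bool * 'I_k * 'I_k).

Lemma mon2E (i j y : 'I_N) s t : mon2 i j s t y = ((i == y) * s + (j == y) * t)%N.
Proof. by rewrite /mon2 mnmDE !mulmnE !mnm1E. Qed.

Lemma outd_mon2 (i j : 'I_N) s t v :
  outd qpos (mon2 i j s t) v = ((vrow qpos i == v) * s + (vrow qpos j == v) * t)%N.
Proof.
rewrite /outd; under eq_bigr do rewrite mon2E.
rewrite big_split -!big_distrl /=.
by rewrite !(@sum_eq_pred _ (fun x => vrow qpos x == v)).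
Qed.

Lemma ind_mon2 (i j : 'I_N) s t v :
  ind qpos (mon2 i j s t) v = ((vcol qpos i == v) * s + (vcol qpos j == v) * t)%N.
Proof.
rewrite /ind; under eq_bigr do rewrite mon2E.
rewrite big_split -!big_distrl /=.
by rewrite !(@sum_eq_pred _ (fun x => vcol qpos x == v)).
Qed.

Lemma struct a b (i j : 'I_N) s t : (2 <= t)%N -> (t <= s)%N ->
  Inv qpos a b (mon2 i j s t) ->
  (vrow qpos i = a /\ vcol qpos i = a /\ vrow qpos j = a /\ vcol qpos j = a /\ b = a) \/
  (vrow qpos i != vcol qpos i /\ vrow qpos j = vcol qpos i /\ vcol qpos j = vrow qpos i /\
    (a = vrow qpos i \/ a = vcol qpos i)).
Proof.
move=> ht hs [F Nz L].
have E : forall v, ((vrow qpos i == v) * s + (vrow qpos j == v) * t + (b == v) =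
   (vcol qpos i == v) * s + (vcol qpos j == v) * t + (a == v))%N.
  by move=> v; rewrite -outd_mon2 -ind_mon2 F.
have pos_m x : (0 < mon2 i j s t x)%N -> x = i \/ x = j.
  rewrite mon2E; case: (i =P x) => [->|_]; first by left.
  case: (j =P x) => [->|_]; [by right | rewrite /=; lia].
set r1 := vrow qpos i in E *; set c1 := vcol qpos i in E *.
set r2 := vrow qpos j in E *; set c2 := vcol qpos j in E *.
case: (r1 =P c1) => [e1|n1].
  have e2 : r2 = c2.
    apply/eqP; apply: contraT => n2; move: (E r2).
    rewrite eqxx e1; case: (c2 =P r2) => [h|_]; [by rewrite h eqxx in n2 | lia].
  have eab : b = a.
    move: (E a); rewrite e1 e2 eqxx; case: (b =P a) => //= _; lia.
  have [rr _] : (forall x, (0 < mon2 i j s t x)%N -> vrow qpos x = a) /\ a = b.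
    apply: L => x /pos_m [->|->]; [exact: e1 | exact: e2].
  have ri : r1 = a by apply: rr; rewrite mon2E eqxx; lia.
  have rj : r2 = a by apply: rr; rewrite mon2E eqxx; lia.
  left; do !split => //; [by rewrite -/c1 -e1 | by rewrite -/c2 -e2].
right.
have c2r1 : c2 = r1.
  apply/eqP; apply: contraT => n; move: (E r1).
  rewrite eqxx eq_sym (negbTE n); have -> : (c1 == r1) = false by apply/eqP => h; apply: n1.
  lia.
have r2r1 : r2 != r1.
  apply/negP => /eqP h; move: (E r1).
  rewrite eqxx h c2r1 eqxx; have -> : (c1 == r1) = false by apply/eqP => h'; apply: n1.
  lia.
have r2c1 : r2 = c1.
  apply/eqP; apply: contraT => n; move: (E c1).
  rewrite eqxx (negbTE n) c2r1; have -> : (r1 == c1) = false by apply/eqP.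
  lia.
split; first by apply/eqP.
split=> //; split=> //.
case: Nz => [m0|[x [hx rx]]].
  have := congr1 (fun m : 'X_{1..N} => m i) m0; rewrite mon2E mnm0E eqxx; lia.
case: (pos_m x hx) => ex; subst x; [by left | by right; rewrite -r2c1].
Qed.

Lemma mon2_inj (i j i' j' : 'I_N) s t : (2 <= t)%N -> (t <= s)%N -> i != j ->
  mon2 i j s t = mon2 i' j' s t -> (i = i' /\ j = j') \/ (i = j' /\ j = i').
Proof.
move=> ht hs nij e.
have ei := congr1 (fun m : 'X_{1..N} => m i) e.
have ej := congr1 (fun m : 'X_{1..N} => m j) e.
have nji : (j == i) = false by rewrite eq_sym (negbTE nij).
rewrite /= !mon2E eqxx nji in ei.
rewrite /= !mon2E eqxx (negbTE nij) in ej.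
case: (i' =P i) ei ej => [->|ni] ei ej.
  left; split=> //; case: (j' =P j) ej => //= _; rewrite ?(negbTE nij) ?nji /=; lia.
case: (j' =P i) ei ej => [->|nj] /= ei ej; last lia.
right; split=> //; case: (i' =P j) ej => //= _; rewrite ?(negbTE nij) ?nji /=; lia.
Qed.
End Struct.


Unset Implicit Arguments.
Set Strict Implicit.


Theorem lemma2p17 (k : nat)
  (pos : bool * 'I_k * 'I_k -> 'I_(2 * k ^ 2))
  (p : ncpoly)
  (P : 'I_(k ^ 2) -> cpoly (2 * k ^ 2))
  (sigma : 'I_k * 'I_k -> 'I_(k ^ 2))
  (s t : nat) (e : real) :
  (3 <= k)%N ->
  bijective pos ->
  bijective sigma ->
  (forall a b : 'I_k,
      P (sigma (a, b)) = nc_eval p (var_mx pos false) (var_mx pos true) a b) ->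
  (1 < ncdeg p)%N ->
  (2 <= t)%N ->
  (s = t \/ s = t.+1) ->
  e <> 0 ->
  (exists L : seq ('I_(k ^ 2) * 'X_{1..2 * k ^ 2}),
      [/\ uniq L, size L = k &
          forall l m, (l, m) \in L <-> ((P l)@_m = e /\ two_letter s t m)]) ->
  forall (l : 'I_(k ^ 2)) (i j : 'I_(2 * k ^ 2)),
    i != j -> (P l)@_(mon2 i j s t) = e ->
    exists c : 'I_k,
      ((i = pos (false, c, c) /\ j = pos (true, c, c)) \/
       (i = pos (true, c, c) /\ j = pos (false, c, c))) /\
      l = sigma (c, c).
Proof.
move=> k3 [qpos posK qposK] [qs sK qsK] HP _ t2 hst e0 [L [uL sL HL]] l i j nij hl.
have hts : (t <= s)%N by case: hst => ->; lia.
set a0 := (qs l).1; set b0 := (qs l).2.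
have el : l = sigma (a0, b0) by rewrite /a0 /b0 -surjective_pairing qsK.
have coefe : (nc_eval p (var_mx pos false) (var_mx pos true) a0 b0)@_(mon2 i j s t) = e.
  by rewrite -HP -el.
have Iv : Inv qpos a0 b0 (mon2 i j s t).
  apply: NNPP => nI; apply: e0; rewrite -coefe; exact: (good_nc posK p nI).
have ei : i = pos ((qpos i).1.1, vrow qpos i, vcol qpos i).
  by rewrite /vrow /vcol -{1}(qposK i); case: (qpos i) => [[??]?].
have ej : j = pos ((qpos j).1.1, vrow qpos j, vcol qpos j).
  by rewrite /vrow /vcol -{1}(qposK j); case: (qpos j) => [[??]?].
case: (struct t2 hts Iv) => [[r1 [c1 [r2 [c2 eb]]]] | [nuv [r2 [c2 ha]]]].
  exists a0; split; last by rewrite el eb.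
  rewrite ei ej r1 c1 r2 c2.
  rewrite ei ej r1 c1 r2 c2 in nij.
  move: nij; case: ((qpos i).1.1); case: ((qpos j).1.1); rewrite ?eqxx //; by auto.
exfalso.
set u := vrow qpos i in nuv r2 c2 ha ei; set v := vcol qpos i in nuv r2 c2 ha ei.
rewrite r2 c2 in ej.
set b1 := (qpos i).1.1 in ei; set b2 := (qpos j).1.1 in ej.
pose piF (x : 'I_k * 'I_k) : {perm 'I_k} := (tperm u x.1 * tperm (tperm u x.1 v) x.2)%g.
have piu x : x.1 != x.2 -> piF x u = x.1.
  move=> hx; rewrite /piF permM tpermL (@tpermD _ (tperm u x.1 v) x.2 x.1) //; last by rewrite eq_sym.
  apply/eqP => h; move: nuv; rewrite -(inj_eq (@perm_inj _ (tperm u x.1))) h tpermL eqxx //.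
have piv x : piF x v = x.2 by rewrite /piF permM tpermL.
pose rh x := rho posK qposK (piF x).
have Fi x : x.1 != x.2 -> rh x i = pos (b1, x.1, x.2).
  by move=> hx; rewrite /rh {1}ei rho_pos piu // piv.
have Fj x : x.1 != x.2 -> rh x j = pos (b2, x.2, x.1).
  by move=> hx; rewrite /rh {1}ej rho_pos piu // piv.
pose F x := (sigma (piF x a0, piF x b0), mon2 (rh x i) (rh x j) s t).
have FL x : x.1 != x.2 -> F x \in L.
  move=> hx; apply/HL; split.
    by rewrite HP /rh sym_coef coefe.
  exists (rh x i), (rh x j); split => //; by rewrite (inj_eq perm_inj).
pose D := [pred x : 'I_k * 'I_k | x.1 != x.2].
have Finj : {in D &, injective F}.
  move=> x y; rewrite /D !inE /= => hx hy exy.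
  have e1 := congr1 fst exy; have e2 := congr1 snd exy; rewrite /= in e1 e2.
  have [ea eb'] := (can_inj sK) _ _ e1.
  rewrite !Fi // !Fj // in e2.
  have nx : pos (b1, x.1, x.2) != pos (b2, x.2, x.1).
    apply/eqP => /(can_inj posK) [_ h _]; by rewrite h eqxx in hx.
  case: (mon2_inj t2 hts nx e2) => [[h1 _]|[h1 _]];
    have h := can_inj posK h1; have h3 := congr1 (fun z => z.1.2) h;
    have h4 := congr1 snd h; rewrite /= in h3 h4.
    by case: x y {hx hy e1 e2 ea eb' nx h1 h exy} h3 h4 => [??] [??] /= -> ->.
  case: ha => ea0; rewrite ea0 in ea.
    rewrite !piu // in ea; by rewrite -ea h3 eqxx in hy.
  rewrite !piv in ea; by rewrite -ea h4 eqxx in hy.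
have := @uniq_leq_size _ (map F (enum D)) L.
rewrite map_inj_in_uniq ?enum_uniq; last by move=> x y; rewrite !mem_enum; exact: Finj.
move=> /(_ isT); rewrite size_map -cardE sL.
have H : {subset map F (enum D) <= L}.
  by move=> z /mapP [x]; rewrite mem_enum => hx ->; exact: FL.
move=> /(_ H) hD.
have cdiag : #|[predC D]| = k.
  rewrite -[RHS](card_ord k) -(@card_codom _ _ (fun c : 'I_k => (c, c))); last by move=> c c' [].
  apply: eq_card => -[x y]; rewrite !inE /= negbK; apply/eqP/codomP => [->|[c [-> ->]]]; [by exists y | by []].
have := cardC D; rewrite cdiag card_prod card_ord => hc.
nia.
Qed.
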